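(* Let $D$ be a core digraph without non-trivial automorphisms such that the almost-sure theory of the class of $D$-coloured digraphs equals the theory of $C_D$. Then asymptotically almost surely, a graph from $\mathrm{Csp}(D)$ has exactly one homomorphism to $D$.
   Context: $D$ is a finite digraph. $\mathrm{Csp}(D)$ is the class of all finite digraphs with a homomorphism to $D$. A $D$-coloured digraph is a digraph $G$ with unary predicates $P_u$ ($u \in V(D)$) such that each vertex lies in exactly one $P_u$ and the map sending $x \in P_u$ to $u$ is a homomorphism $G \to D$. $C_D$ is the (unique up to isomorphism) countable homogeneous $D$-coloured digraph whose finite substructures are exactly the finite $D$-coloured digraphs. A core is a finite digraph all of whose endomorphisms are automorphisms. Random graphs are drawn uniformly from those with vertex set $\{1,\dots,n\}$. *)

(* Defs.v *)
From mathcomp Require Import all_boot all_algebra.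
From mathcomp Require Import boolp.
From Stdlib Require List.
Set Implicit Arguments. Unset Strict Implicit. Unset Printing Implicit Defensive.
Import GRing.Theory Num.Theory.

Definition dhom (V : finType) (ED : rel V) (f : V -> V) : Prop :=
  forall x y, ED x y -> ED (f x) (f y).

Definition daut (V : finType) (ED : rel V) (f : V -> V) : Prop :=
  bijective f /\ forall x y, ED x y = ED (f x) (f y).

Definition is_core (V : finType) (ED : rel V) : Prop :=
  forall f : V -> V, dhom ED f -> daut ED f.

Definition trivial_aut (V : finType) (ED : rel V) : Prop :=
  forall f : V -> V, daut ED f -> forall x, f x = x.

Definition digraph (n : nat) := {ffun 'I_n * 'I_n -> bool}.

Definition is_hom (V : finType) (ED : rel V) n (G : digraph n) (h : {ffun 'I_n -> V}) : bool :=
  [forall x, [forall y, G (x, y) ==> ED (h x) (h y)]].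

Inductive fo (V : Type) : Type :=
| FEq  : nat -> nat -> fo V
| FE   : nat -> nat -> fo V
| FP   : V -> nat -> fo V
| FBot : fo V
| FNeg : fo V -> fo V
| FAnd : fo V -> fo V -> fo V
| FOr  : fo V -> fo V -> fo V
| FImp : fo V -> fo V -> fo V
| FEx  : nat -> fo V -> fo V
| FAll : nat -> fo V -> fo V.

Fixpoint fv (V : Type) (phi : fo V) : seq nat :=
  match phi with
  | FEq i j => [:: i; j]
  | FE i j => [:: i; j]
  | FP _ i => [:: i]
  | FBot => [::]
  | FNeg p => fv p
  | FAnd p q => fv p ++ fv q
  | FOr p q => fv p ++ fv q
  | FImp p q => fv p ++ fv q
  | FEx i p => [seq k <- fv p | k != i]
  | FAll i p => [seq k <- fv p | k != i]
  end.

Definition sentence (V : Type) (phi : fo V) : Prop := fv phi = [::].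

Definition upd (A : Type) (env : nat -> A) (i : nat) (a : A) : nat -> A :=
  fun k => if k == i then a else env k.

(* Satisfaction in a D-coloured structure (A, E, col): x lies in P_u iff col x = u. *)
Fixpoint sat (V A : Type) (E : A -> A -> Prop) (col : A -> V)
    (env : nat -> A) (phi : fo V) : Prop :=
  match phi with
  | FEq i j => env i = env j
  | FE i j => E (env i) (env j)
  | FP u i => col (env i) = u
  | FBot => False
  | FNeg p => ~ sat E col env p
  | FAnd p q => sat E col env p /\ sat E col env q
  | FOr p q => sat E col env p \/ sat E col env q
  | FImp p q => sat E col env p -> sat E col env q
  | FEx i p => exists a : A, sat E col (upd env i a) p
  | FAll i p => forall a : A, sat E col (upd env i a) p
  end.

Definition models (V A : Type) (E : A -> A -> Prop) (col : A -> V) (phi : fo V) : Prop :=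
  forall env : nat -> A, sat E col env phi.

(* Probability that a uniformly random D-coloured digraph on {1..n} satisfies phi. *)
Definition prob_col (V : finType) (ED : rel V) (phi : fo V) (n : nat) : rat :=
  (#|[set p : digraph n * {ffun 'I_n -> V} |
        is_hom ED p.1 p.2 && `[< models (fun x y => p.1 (x, y) : Prop) p.2 phi >]]|%:R
   / #|[set p : digraph n * {ffun 'I_n -> V} | is_hom ED p.1 p.2]|%:R)%R.

(* Probability that a uniformly random digraph on {1..n} in Csp(D)
   has exactly one homomorphism to D. *)
Definition prob_unique_hom (V : finType) (ED : rel V) (n : nat) : rat :=
  (#|[set G : digraph n | #|[set h : {ffun 'I_n -> V} | is_hom ED G h]| == 1%N]|%:R
   / #|[set G : digraph n | [exists h : {ffun 'I_n -> V}, is_hom ED G h]]|%:R)%R.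

(* p n -> 1 as n -> oo (p n <= 1 always for the probabilities above). *)
Definition tends_to_one (p : nat -> rat) : Prop :=
  forall eps : rat, (0 < eps)%R -> exists N : nat, forall n : nat, (N <= n)%N -> (1 - eps <= p n)%R.

(* (A, EC, colC) is a countable homogeneous D-coloured digraph whose finite
   substructures are exactly the finite D-coloured digraphs. *)
Definition is_CD (V : finType) (ED : rel V) (A : Type) (EC : A -> A -> Prop)
    (colC : A -> V) : Prop :=
  (exists f : A -> nat, injective f) /\
  (forall x y, EC x y -> ED (colC x) (colC y)) /\
  (forall n (G : digraph n) (c : {ffun 'I_n -> V}), is_hom ED G c ->
     exists emb : 'I_n -> A, injective emb /\
       (forall x y, G (x, y) <-> EC (emb x) (emb y)) /\
       (forall x, colC (emb x) = c x)) /\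
  (* homogeneous: every isomorphism between finite substructures extends to an automorphism *)
  (forall (s : seq A) (f : A -> A),
     (forall x y, List.In x s -> List.In y s -> f x = f y -> x = y) ->
     (forall x y, List.In x s -> List.In y s -> (EC x y <-> EC (f x) (f y))) ->
     (forall x, List.In x s -> colC (f x) = colC x) ->
     exists g : A -> A, bijective g /\
       (forall x y, EC x y <-> EC (g x) (g y)) /\
       (forall x, colC (g x) = colC x) /\
       (forall x, List.In x s -> g x = f x)).

(* Main.v *)
Require Import Defs.
From mathcomp Require Import all_boot all_algebra.
From mathcomp Require Import boolp.
From mathcomp Require Import order.
Set Implicit Arguments. Unset Strict Implicit. Unset Printing Implicit Defensive.
Import Order.TTheory GRing.Theory Num.Theory.

Fixpoint andsF (V T : Type) (l : seq T) (F : T -> fo V) : fo V :=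
  match l with [::] => FNeg (FBot V) | t :: l' => FAnd (F t) (andsF l' F) end.
Fixpoint orsF (V T : Type) (l : seq T) (F : T -> fo V) : fo V :=
  match l with [::] => FBot V | t :: l' => FOr (F t) (orsF l' F) end.
Fixpoint exs (V : Type) (l : seq nat) (p : fo V) : fo V :=
  match l with [::] => p | i :: l' => FEx i (exs l' p) end.

Lemma sat_andsF V A E col env (T : eqType) (l : seq T) F :
  @sat V A E col env (andsF l F) <-> (forall t, t \in l -> sat E col env (F t)).
Proof.
elim: l => [|t l IH] /=.
  by split => [_ t|_ []]; rewrite in_nil.
rewrite IH; split => [[h1 h2] s|h].
  by rewrite in_cons => /orP[/eqP->|]; auto.
split; first by apply: h; rewrite mem_head.
by move=> s hs; apply: h; rewrite in_cons hs orbT.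
Qed.

Lemma sat_orsF V A E col env (T : eqType) (l : seq T) F :
  @sat V A E col env (orsF l F) <-> (exists t, t \in l /\ sat E col env (F t)).
Proof.
elim: l => [|t l IH] /=.
  by split => [[]|[t []]]; rewrite in_nil.
rewrite IH; split => [[h|[s [hs h]]]|[s []]].
- by exists t; rewrite mem_head.
- by exists s; rewrite in_cons hs orbT.
- by rewrite in_cons => /orP[/eqP->|hs h]; [left|right; exists s].
Qed.

Lemma sat_exs_intro V A E col (l : seq nat) (p : fo V) : forall (env env' : nat -> A),
  (forall k, k \notin l -> env' k = env k) -> sat E col env' p -> sat E col env (exs l p).
Proof.
elim: l => [|i l IH] env env' hag hs /=.
  have -> : env = env' by apply: funext => k; rewrite hag.
  done.
exists (env' i); apply: (IH _ env') => // k hk.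
rewrite /upd; case: eqP => [->//|/eqP ne]; apply: hag.
by rewrite in_cons negb_or ne.
Qed.

Lemma sat_exs_elim V A E col (l : seq nat) (p : fo V) : forall (env : nat -> A),
  sat E col env (exs l p) ->
  exists env', (forall k, k \notin l -> env' k = env k) /\ sat E col env' p.
Proof.
elim: l => [|i l IH] env /=; first by move=> h; exists env.
move=> [a /IH [env' [hag hs]]]; exists env'; split => // k.
rewrite in_cons negb_or => /andP[ne nl].
by rewrite hag // /upd (negbTE ne).
Qed.

Lemma fv_exs V (l : seq nat) (p : fo V) : fv (exs l p) = [seq k <- fv p | k \notin l].
Proof.
elim: l => [|i l IH] /=; first by rewrite filter_predT.
rewrite IH -filter_predI; apply: eq_filter => k /=.
by rewrite in_cons negb_or andbC.
Qed.

Lemma fv_andsF V (T : Type) (P : pred nat) (l : seq T) (F : T -> fo V) :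
  (forall t, all P (fv (F t))) -> all P (fv (andsF l F)).
Proof. by move=> h; elim: l => //= t l IH; rewrite all_cat h. Qed.

Lemma fv_orsF V (T : Type) (P : pred nat) (l : seq T) (F : T -> fo V) :
  (forall t, all P (fv (F t))) -> all P (fv (orsF l F)).
Proof. by move=> h; elim: l => //= t l IH; rewrite all_cat h. Qed.

Section Psi.
Variables (V : finType) (ED : rel V).

Definition var (v : V) : nat := (index v (enum V)).+1.

Lemma var_inj : injective var.
Proof.
move=> v w /eqP; rewrite eqSS => /eqP h.
by rewrite -(nth_index v (mem_enum V v)) h nth_index ?mem_enum.
Qed.

Definition Bpsi : fo V :=
  FAnd (andsF (enum V) (fun v => FP v (var v)))
   (FAnd (andsF (enum {: V * V})
            (fun p => if ED p.1 p.2 then FE V (var p.1) (var p.2) else FNeg (FBot V)))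
         (orsF (enum V) (fun v => FEq V 0 (var v)))).

Definition psi : fo V := FAll 0 (exs (map var (enum V)) Bpsi).

Lemma psi_sentence : sentence psi.
Proof.
rewrite /sentence /psi /= fv_exs.
set L := map var (enum V).
have hv : forall v, var v \in L by move=> v; apply: map_f; rewrite mem_enum.
have : all (fun k => (k == 0) || (k \in L)) (fv Bpsi).
  rewrite /Bpsi /= !all_cat; apply/and3P; split.
  - by apply: fv_andsF => v /=; rewrite hv ?orbT.
  - by apply: fv_andsF => -[v w] /=; case: ifP => //= _; rewrite !hv ?orbT.
  - by apply: fv_orsF => v /=; rewrite hv ?orbT.
elim: (fv Bpsi) => //= a s IH /andP[Pa Ps].
case/orP: Pa => [/eqP->|aL]; first by case: ifP => _ /=; rewrite IH.
by rewrite aL /= IH.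
Qed.

Lemma is_homP n (G : digraph n) h x y : is_hom ED G h -> G (x, y) -> ED (h x) (h y).
Proof. by move=> /forallP /(_ x) /forallP /(_ y) /implyP. Qed.

Lemma psi_unique n (G : digraph n) (c g : {ffun 'I_n -> V}) :
  is_core ED -> trivial_aut ED ->
  models (fun x y => G (x, y) : Prop) c psi -> is_hom ED G g -> g = c.
Proof.
move=> Hcore Htriv Hm Hg; apply/ffunP => x.
have := Hm (fun _ => x) x; rewrite /psi.
move=> /sat_exs_elim [env' [hag [H1 [H2 H3]]]].
have e0 : env' 0 = x.
  rewrite hag ?/upd ?eqxx //; apply/mapP => -[v _] /eqP; done.
move/sat_andsF: H1 => H1; move/sat_andsF: H2 => H2; move/sat_orsF: H3 => [v0 [_ H3]].
pose f := fun v => g (env' (var v)).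
have hf : dhom ED f.
  move=> v w E; have := H2 (v, w) (mem_enum _ _); rewrite /= E /= => hE.
  exact: is_homP hE.
have fid := Htriv f (Hcore f hf).
have := fid v0; rewrite /f /= -H3 e0 => ->.
by have := H1 v0 (mem_enum _ _); rewrite /= -H3 e0.
Qed.

Lemma CD_psi A (EC : A -> A -> Prop) colC :
  (forall u, ~~ ED u u) -> is_CD ED EC colC -> models EC colC psi.
Proof.
move=> noloop [_ [Ehom [Emb Hom]]] env x /=.
pose u := colC x.
pose G : digraph #|V| := [ffun p => ED (enum_val p.1) (enum_val p.2)].
pose c : {ffun 'I_#|V| -> V} := [ffun i => enum_val i].
have hc : is_hom ED G c.
  by apply/forallP => i; apply/forallP => j; apply/implyP; rewrite !ffunE.
have [emb [_ [Hemb Hcol]]] := Emb _ G c hc.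
pose z := emb (enum_rank u).
have nl : forall a, ~ EC a a.
  by move=> a /Ehom; rewrite (negbTE (noloop _)).
have s1 : forall a b, List.In a [:: z] -> List.In b [:: z] -> x = x -> a = b.
  by move=> a b /= [<-|[]] [<-|[]].
have s2 : forall a b, List.In a [:: z] -> List.In b [:: z] -> (EC a b <-> EC x x).
  by move=> a b /= [<-|[]] [<-|[]]; split => /nl [].
have s3 : forall a, List.In a [:: z] -> colC x = colC a.
  by move=> a /= [<-|[]]; rewrite Hcol ffunE enum_rankK.
have [g [_ [Hg [Hgc Hgs]]]] := Hom [:: z] (fun _ => x) s1 s2 s3.
have gz : g z = x by apply: Hgs; left.
pose y v := g (emb (enum_rank v)).
pose env' := fun k => if [pick v | var v == k] is Some v then y v else upd env 0 x k.
have ev : forall v, env' (var v) = y v.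
  move=> v; rewrite /env'; case: pickP => [w /eqP /var_inj -> //|/(_ v)].
  by rewrite eqxx.
have e0 : env' 0 = x.
  by rewrite /env'; case: pickP => [w /eqP //|_]; rewrite /upd eqxx.
apply: (@sat_exs_intro _ _ _ _ _ _ _ env').
  move=> k hk; rewrite /env'; case: pickP => [v /eqP hv|//].
  by move: hk; rewrite -hv map_f ?mem_enum.
split; [|split].
- apply/sat_andsF => v _ /=; by rewrite ev /y Hgc Hcol ffunE enum_rankK.
- apply/sat_andsF => -[v w] _ /=; case E: (ED v w) => /=; last by case.
  rewrite !ev /y -Hg -Hemb ffunE /= !enum_rankK E //.
- apply/sat_orsF; exists u; split; first by rewrite mem_enum.
  by rewrite /= e0 ev /y -gz.
Qed.

End Psi.

Lemma ratio (V : finType) (ED : rel V) (v0 : V) (phi : fo V) n :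
  (forall (G : digraph n) (c g : {ffun 'I_n -> V}), is_hom ED G c -> is_hom ED G g ->
      models (fun x y => G (x, y) : Prop) c phi -> g = c) ->
  (prob_col ED phi n <= prob_unique_hom ED n)%R.
Proof.
move=> Hu; rewrite /prob_col /prob_unique_hom.
set Good := [set p : digraph n * {ffun 'I_n -> V} | _ ].
set N := [set p : digraph n * {ffun 'I_n -> V} | _ ].
set S := [set G : digraph n | _ ].
set U := [set G : digraph n | _ ].
have hGS : #|Good| <= #|S|.
  rewrite -(card_in_imset (f := fst)).
    apply: subset_leq_card; apply/subsetP => G' /imsetP [[G c]].
    rewrite inE /= => /andP[h /asboolP m] ->; rewrite inE /=.
    apply/cards1P; exists c; apply/setP => h'; rewrite !inE.
    by apply/idP/eqP => [hh|->//]; apply: (Hu G c h' h hh m).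
  move=> [G c] [G' c']; rewrite !inE /= => /andP[h1 /asboolP m1] /andP[h2 _] eG.
  by subst G'; rewrite (Hu G c c' h1 h2 m1).
have hUN : #|U| <= #|N|.
  have : U \subset fst @: N.
    apply/subsetP => G; rewrite inE => /existsP [h hh]; apply/imsetP.
    by exists (G, h); rewrite ?inE.
  by move/subset_leq_card/leq_trans; apply; apply: leq_imset_card.
have hU0 : 0 < #|U|.
  apply/card_gt0P; exists [ffun _ => false]; rewrite inE.
  apply/existsP; exists [ffun _ => v0].
  by apply/forallP => i; apply/forallP => j; rewrite ffunE.
have hN0 : 0 < #|N| by apply: leq_trans hUN.
rewrite ler_pdivrMr ?ltr0n // mulrAC ler_pdivlMr ?ltr0n //.
by rewrite -!natrM ler_nat leq_mul.
Qed.

Theorem lemma4p15 (V : finType) (ED : rel V) :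
  is_core ED ->
  trivial_aut ED ->
  (exists (A : Type) (EC : A -> A -> Prop) (colC : A -> V),
      is_CD ED EC colC /\
      forall phi : fo V, sentence phi ->
        (tends_to_one (prob_col ED phi) <-> models EC colC phi)) ->
  tends_to_one (prob_unique_hom ED).
Proof.
move=> Hcore Htriv [A [EC [colC [HCD H]]]].
case: (pickP (fun _ : V => true)) => [v0 _ | hV0]; last first.
  have hm : models EC colC (FBot V).
    by move=> env; have := hV0 (colC (env 0)).
  have [N HN] := (proj2 (H (FBot V) erefl) hm) (1 / 2)%R erefl.
  have := HN N.+1 (leqnSn _).
  rewrite /prob_col (_ : [set p : digraph N.+1 * {ffun 'I_N.+1 -> V} | _ ] = set0).
    by rewrite cards0 mul0r.
  by apply/setP => p; rewrite !inE; have := hV0 (p.2 ord0).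
suff [phi [Ht Hu]] : exists phi : fo V, tends_to_one (prob_col ED phi) /\
    forall n (G : digraph n) (c g : {ffun 'I_n -> V}), is_hom ED G c -> is_hom ED G g ->
      models (fun x y => G (x, y) : Prop) c phi -> g = c.
  move=> eps he; have [N HN] := Ht eps he; exists N => n hn.
  exact: le_trans (HN n hn) (ratio v0 (Hu n)).
case: (pickP (fun u => ED u u)) => [u hu | noloop].
  have [Hb _] := Hcore (fun _ => u) (fun _ _ _ => hu).
  have allu : forall v, v = u by move=> v; apply: (bij_inj Hb).
  exists (FNeg (FBot V)); split.
    by apply/(H (FNeg (FBot V)) erefl) => env /=.
  by move=> n G c g _ _ _; apply/ffunP => x; rewrite (allu (g x)) (allu (c x)).
exists (psi ED); split.
  apply/(H _ (psi_sentence ED)); apply: CD_psi => // u; by rewrite noloop.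
by move=> n G c g _ hg hm; apply: (psi_unique Hcore Htriv hm hg).
Qed.
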